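(* Let $B=\bigoplus_{i\in\mathbb{Z}}B_i$ be a $\mathbb{Z}$-graded integral domain containing $\mathbb{Q}$, and let $D:B\to B$ be a nonzero homogeneous locally nilpotent derivation such that $\ker D\not\subseteq B_0$. Then some element of $D(B)\cap\ker(D)$ is a cylindrical element of $B$.
   Context: A derivation $D$ is homogeneous if there is $d$ with $D(B_i)\subseteq B_{i+d}$ for all $i$; it is locally nilpotent if for each $b$ there is $n>0$ with $D^n(b)=0$. For nonzero homogeneous $f$, $B_{(f)}$ is the degree-$0$ subring of $B_f$. A ring is a polynomial ring in one variable if it is a polynomial ring in one variable over some subring (the zero ring counts). A cylindrical element of $B$ is a nonzero homogeneous $f$ of nonzero degree with $B_{(f)}$ a polynomial ring in one variable. *)

(* Defs.v *)
From HB Require Import structures.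
From mathcomp Require Import all_boot all_order all_algebra.
Set Implicit Arguments. Unset Strict Implicit. Unset Printing Implicit Defensive.
Import Order.TTheory GRing.Theory Num.Theory.
Local Open Scope ring_scope.

Definition contains_Q (B : comUnitRingType) : Prop :=
  forall n : nat, (n.+1)%:R \is a @GRing.unit B.

Definition Zgrading (B : comRingType) (Bi : int -> B -> Prop) : Prop :=
  [/\ (forall i, Bi i 0),
      (forall i x y, Bi i x -> Bi i y -> Bi i (x - y)),
      (forall i j x y, Bi i x -> Bi j y -> Bi (i + j) (x * y)) /\ Bi 0 1,
      (forall b : B, exists (s : seq int) (f : int -> B),
          (forall i, Bi i (f i)) /\ b = \sum_(i <- s) f i)
    &
      (forall (s : seq int) (f : int -> B), uniq s ->
          (forall i, Bi i (f i)) -> \sum_(i <- s) f i = 0 ->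
          forall i, i \in s -> f i = 0)].

Definition is_derivation (B : comRingType) (D : B -> B) : Prop :=
  (forall x y, D (x + y) = D x + D y) /\
  (forall x y, D (x * y) = x * D y + y * D x).

Definition homogeneous_map (B : comRingType) (Bi : int -> B -> Prop)
  (D : B -> B) : Prop :=
  exists d : int, forall i b, Bi i b -> Bi (i + d) (D b).

Definition locally_nilpotent (B : comRingType) (D : B -> B) : Prop :=
  forall b, exists n : nat, (0 < n)%N /\ iter n D b = 0.

(* The degree-0 part B_(f) of B_f, viewed inside the fraction field of B:
   the elements b / f^n with b homogeneous of degree n * deg f. *)
Definition loc_deg0 (B : idomainType) (Bi : int -> B -> Prop) (f : B)
  (x : {fraction B}) : Prop :=
  exists d : int, Bi d f /\
    exists (n : nat) (b : B), Bi (n%:Z * d) b /\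
      x = FracField.tofrac b / (FracField.tofrac f) ^+ n.

(* S (a subring of the field K) is a polynomial ring in one variable:
   S = A[t] for a subring A of S and an element t algebraically independent
   over A. *)
Definition poly_ring_one_var (K : fieldType) (S : K -> Prop) : Prop :=
  exists (A : K -> Prop) (t : K),
    [/\ A 1,
        (forall x y, A x -> A y -> A (x - y)),
        (forall x y, A x -> A y -> A (x * y)),
        (forall x, S x <-> exists p : {poly K},
                             (forall i, A p`_i) /\ x = p.[t])
      & (forall p : {poly K}, (forall i, A p`_i) -> p.[t] = 0 -> p = 0)].

Definition cylindrical (B : idomainType) (Bi : int -> B -> Prop) (f : B) : Prop :=
  [/\ f != 0,
      exists d : int, d != 0 /\ Bi d f
    & poly_ring_one_var (loc_deg0 Bi f)].

(* Main.v *)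
Require Import Defs.
From HB Require Import structures.
From mathcomp Require Import all_boot all_order all_algebra.
From mathcomp Require Import ring zify.
From Stdlib Require Import Classical.
Import Order.TTheory GRing.Theory Num.Theory.
Local Open Scope ring_scope.
Set Implicit Arguments. Unset Strict Implicit. Unset Printing Implicit Defensive.

Section Grading.
Variables (B : idomainType) (Bi : int -> B -> Prop).
Hypothesis HG : Zgrading Bi.

Lemma Bi0 i : Bi i 0.
Proof. by case: HG. Qed.
Lemma BiB i x y : Bi i x -> Bi i y -> Bi i (x - y).
Proof. by case: HG => _ H _ _ _; apply: H. Qed.
Lemma BiN i x : Bi i x -> Bi i (- x).
Proof. by move=> h; rewrite -sub0r; apply: BiB => //; apply: Bi0. Qed.
Lemma BiD i x y : Bi i x -> Bi i y -> Bi i (x + y).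
Proof. by move=> hx hy; rewrite -[y]opprK; apply: BiB => //; apply: BiN. Qed.
Lemma BiM i j x y : Bi i x -> Bi j y -> Bi (i + j) (x * y).
Proof. by case: HG => _ _ [H _] _ _; apply: H. Qed.
Lemma Bi1 : Bi 0 1.
Proof. by case: HG => _ _ [_ H] _ _. Qed.
Lemma Bi_eq i j x : i = j -> Bi i x -> Bi j x.
Proof. by move=> ->. Qed.
Lemma BiM' i j k x y : Bi i x -> Bi j y -> i + j = k -> Bi k (x * y).
Proof. by move=> hx hy <-; apply: BiM. Qed.
Lemma BiX i x n : Bi i x -> Bi (n%:Z * i) (x ^+ n).
Proof.
move=> hx; elim: n => [|n IH]; first by rewrite expr0 mul0r; apply: Bi1.
rewrite exprS; apply: BiM' hx IH _; rewrite intS; ring.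
Qed.
Lemma Bi_nat n : Bi 0 n%:R.
Proof.
elim: n => [|n IH]; first by apply: Bi0.
by rewrite -addn1 natrD; apply: BiD => //; apply: Bi1.
Qed.
Lemma Bi_sum (I : Type) (s : seq I) (P : pred I) (g : I -> B) i :
  (forall j, P j -> Bi i (g j)) -> Bi i (\sum_(j <- s | P j) g j).
Proof.
move=> h; elim/big_rec: _ => [|j x Pj hx]; first by apply: Bi0.
by apply: BiD => //; apply: h.
Qed.
Lemma Bi_mulnr i x n : Bi i x -> Bi i (x *+ n).
Proof. by move=> h; rewrite -mulr_natr; apply: BiM' h (Bi_nat n) _; rewrite addr0. Qed.

Lemma dir_comp (s : seq int) (g : int -> B) k :
  uniq s -> (forall i, Bi i (g i)) -> Bi k (\sum_(i <- s) g i) ->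
  forall i, i \in s -> i != k -> g i = 0.
Proof.
move=> us hg hk.
case: HG => _ _ _ _ Hdir.
pose y := \sum_(i <- s) g i.
have [ks|nks] := boolP (k \in s).
- pose g' := fun i => if i == k then g i - y else g i.
  have hg' : forall i, Bi i (g' i).
    by move=> i; rewrite /g'; case: eqP => [->|_] //; apply: BiB.
  have H0 : \sum_(i <- s) g' i = 0.
    rewrite (bigD1_seq k) //= /g' eqxx.
    rewrite (eq_bigr g); last by move=> i /negbTE ->.
    by rewrite /y (bigD1_seq k) //=; ring.
  move=> i iin ik; have := Hdir s g' us hg' H0 i iin.
  by rewrite /g' (negbTE ik).
- pose g' := fun i => if i == k then - y else g i.
  have hg' : forall i, Bi i (g' i).
    by move=> i; rewrite /g'; case: eqP => [->|_] //; apply: BiN.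
  have H0 : \sum_(i <- k :: s) g' i = 0.
    rewrite big_cons /g' eqxx.
    rewrite (eq_big_seq g); last first.
      by move=> i iin; case: eqP => // E; move: nks; rewrite -E iin.
    by rewrite /y; ring.
  move=> i iin ik; have := Hdir (k :: s) g'.
  rewrite /= nks us => /(_ isT hg' H0 i); rewrite inE iin orbT /g' (negbTE ik).
  by apply.
Qed.

Lemma deg_uniq i j x : Bi i x -> Bi j x -> x != 0 -> i = j.
Proof.
move=> hi hj nz; apply/eqP; apply/negPn/negP => ij.
pose g := fun l => if l == i then x else 0.
have hg : forall l, Bi l (g l).
  by move=> l; rewrite /g; case: eqP => [->|_] //; apply: Bi0.
have : g i = 0.
  apply: (@dir_comp [:: i] g j) => //.
  - by rewrite big_cons big_nil addr0 /g eqxx.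
  - by rewrite inE.
by rewrite /g eqxx => E; rewrite E eqxx in nz.
Qed.

Lemma decomp_uniq b : exists s (g : int -> B),
  [/\ uniq s, (forall i, Bi i (g i)) & b = \sum_(i <- s) g i].
Proof.
case: HG => _ _ _ Hdec _.
have [s [g [hg ->]]] := Hdec b.
elim: s => [|x s [s' [g' [us hg' E]]]].
  by exists [::], g; split => //; rewrite !big_nil.
have [xs|nxs] := boolP (x \in s').
- exists s', (fun i => if i == x then g' i + g i else g' i); split => //.
  + by move=> i; case: eqP => [->|_] //; apply: BiD.
  + rewrite big_cons E (bigD1_seq x) //= [in RHS](bigD1_seq x) //= eqxx.
    rewrite [in RHS](eq_bigr g'); last by move=> i /negbTE ->.
    ring.
- exists (x :: s'), (fun i => if i == x then g i else g' i); split => //.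
  + by rewrite /= nxs.
  + by move=> i; case: eqP => [->|_] //.
  + rewrite !big_cons eqxx E; congr (_ + _).
    by apply: eq_big_seq => i iin; case: eqP => // E'; move: nxs; rewrite -E' iin.
Qed.

Lemma Bi_inv_nat n : (n%:R : B) \is a GRing.unit -> Bi 0 (n%:R)^-1.
Proof.
move=> un.
have [s [g [us hg E]]] := decomp_uniq (n%:R)^-1.
have nz : (n%:R : B) != 0 by apply/eqP => h; rewrite h unitr0 in un.
have H1 : forall i, i \in s -> i != 0 -> g i = 0.
  move=> i iin i0.
  have h : n%:R * g i = 0.
    apply: (@dir_comp s (fun i => n%:R * g i) 0 us _ _ i iin i0).
    - by move=> l; apply: BiM' (Bi_nat n) (hg l) _; rewrite add0r.
    - by rewrite -mulr_sumr -E divrr //; apply: Bi1.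
  by move/eqP: h; rewrite mulf_eq0 (negbTE nz) => /eqP.
rewrite E big_seq; apply: Bi_sum => i iin.
by have [->|i0] := eqVneq i 0; [apply: hg | rewrite H1 //; apply: Bi0].
Qed.

End Grading.

Section Deriv.
Variables (B : idomainType) (D : B -> B).
Hypothesis HD : is_derivation D.

Lemma D_add x y : D (x + y) = D x + D y. Proof. by case: HD. Qed.
Lemma D_mul x y : D (x * y) = x * D y + y * D x. Proof. by case: HD. Qed.
Lemma D0 : D 0 = 0.
Proof. by apply: (@addrI _ (D 0)); rewrite -D_add !addr0. Qed.
Lemma DN x : D (- x) = - D x.
Proof. by apply/eqP; rewrite -addr_eq0 -D_add addNr D0. Qed.
Lemma DB x y : D (x - y) = D x - D y. Proof. by rewrite D_add DN. Qed.
Lemma D1 : D 1 = 0.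
Proof.
have h := D_mul 1 1; rewrite !mul1r in h.
by apply: (@addrI _ (D 1)); rewrite addr0 -h.
Qed.
Lemma Dmn x n : D (x *+ n) = D x *+ n.
Proof. by elim: n => [|n IH]; rewrite ?mulr0n ?D0 // !mulrS D_add IH. Qed.
Lemma D_nat n : D n%:R = 0.
Proof. by rewrite Dmn D1 mul0rn. Qed.
Lemma D_sum (I : Type) (s : seq I) (P : pred I) (F : I -> B) :
  D (\sum_(i <- s | P i) F i) = \sum_(i <- s | P i) D (F i).
Proof. by apply: (big_morph D D_add D0). Qed.
Lemma D_kM a x : D a = 0 -> D (a * x) = a * D x.
Proof. by move=> ha; rewrite D_mul ha mulr0 addr0. Qed.
Lemma DX x n : D (x ^+ n) = x ^+ n.-1 * D x *+ n.
Proof.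
elim: n => [|n IH]; first by rewrite expr0 D1 mulr0n.
rewrite exprS D_mul IH /=; case: n IH => [|n] IH.
  by rewrite mulr0n mulr0 add0r mulr1n.
by rewrite mulrnAr mulrA -exprS [in RHS]mulrS addrC.
Qed.
Lemma D_kX a n : D a = 0 -> D (a ^+ n) = 0.
Proof. by move=> h; rewrite DX h mulr0 mul0rn. Qed.

Lemma iterD_add k x y : iter k D (x + y) = iter k D x + iter k D y.
Proof. by elim: k => [|k IH] //=; rewrite IH D_add. Qed.
Lemma iterD0 k : iter k D 0 = 0.
Proof. by elim: k => [|k IH] //=; rewrite IH D0. Qed.
Lemma iterD_sum k (I : Type) (s : seq I) (P : pred I) (F : I -> B) :
  iter k D (\sum_(i <- s | P i) F i) = \sum_(i <- s | P i) iter k D (F i).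
Proof. by apply: (big_morph (iter k D) (iterD_add k) (iterD0 k)). Qed.
Lemma iterD_N k x : iter k D (- x) = - iter k D x.
Proof. by elim: k => [|k IH] //=; rewrite IH DN. Qed.
Lemma iterD_B k x y : iter k D (x - y) = iter k D x - iter k D y.
Proof. by rewrite iterD_add iterD_N. Qed.
Lemma iterD_kM k a x : D a = 0 -> iter k D (a * x) = a * iter k D x.
Proof. by move=> ha; elim: k => [|k IH] //=; rewrite IH D_kM. Qed.

Lemma iterD_pow R g a k j : D R = g -> D g = 0 -> D a = 0 ->
  iter k D (a * R ^+ j) = a * g ^+ k * R ^+ (j - k) *+ j ^_ k.
Proof.
move=> hR hg ha; elim: k => [|k IH].
  by rewrite /= expr0 mulr1 subn0 ffactn0 mulr1n.
rewrite iterS IH Dmn -mulrA D_kM // D_kM; last exact: D_kX _ hg.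
rewrite DX hR ffactnSr mulnC mulrnA subnS; congr (_ *+ _).
by rewrite !mulrnAr exprS; congr (_ *+ _); ring.
Qed.

Lemma iterD_hom (Bi : int -> B -> Prop) d k i x :
  (forall i b, Bi i b -> Bi (i + d) (D b)) -> Bi i x ->
  Bi (i + k%:Z * d) (iter k D x).
Proof.
move=> hD hx; elim: k => [|k IH]; first by rewrite mul0r addr0.
rewrite iterS; have := hD _ _ IH; congr Bi; rewrite intS; ring.
Qed.

End Deriv.

Section Slice.
Variables (B : idomainType) (Bi : int -> B -> Prop) (D : B -> B).
Hypothesis HG : Zgrading Bi.
Hypothesis HQ : contains_Q B.
Hypothesis HD : is_derivation D.
Variable d : int.
Hypothesis hDd : forall i b, Bi i b -> Bi (i + d) (D b).

Lemma natr_neq0 k : (0 < k)%N -> (k%:R : B) != 0.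
Proof.
move=> k0; rewrite -(prednK k0); apply/eqP => h.
by have := HQ k.-1; rewrite h unitr0.
Qed.

Lemma natr_unit k : (0 < k)%N -> (k%:R : B) \is a GRing.unit.
Proof. by move=> k0; rewrite -(prednK k0); apply: HQ. Qed.

Lemma Dker_mul x y : D x = 0 -> D y = 0 -> D (x * y) = 0.
Proof. by move=> hx hy; rewrite (D_mul HD) hx hy !mulr0 addr0. Qed.

Lemma Dker_inv k : (0 < k)%N -> D (k%:R^-1) = 0.
Proof.
move=> k0; have nz := natr_neq0 k0.
have := D_mul HD (k%:R) (k%:R^-1).
rewrite mulrV ?natr_unit // (D1 HD) (D_nat HD) mulr0 addr0 => /esym/eqP.
by rewrite mulf_eq0 (negbTE nz) => /eqP.
Qed.

Variables (f R : B) (e1 r1 : int).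
Hypotheses (hR : D R = f) (hf : D f = 0) (hBR : Bi r1 R) (hBf : Bi e1 f)
  (he : e1 = r1 + d).

Lemma slice n : forall b δ, Bi δ b -> iter n D b = 0 ->
  exists N c (q : {poly B}), [/\ (0 < c)%N, c%:R * f ^+ N * b = q.[R] &
    forall j, D q`_j = 0 /\ Bi (δ + N%:Z * e1 - j%:Z * r1) q`_j].
Proof.
elim: n => [|n IH] b δ hb hn.
  rewrite /= in hn; subst b; exists 0%N, 1%N, 0; split => //.
    by rewrite mulr0 horner0.
  by move=> j; rewrite coef0 (D0 HD); split => //; apply: Bi0.
pose a := iter n D b.
have ha : D a = 0 by rewrite /a -iterS.
have hBa : Bi (δ + n%:Z * d) a by apply: iterD_hom.
pose b' := n`!%:R * f ^+ n * b - a * R ^+ n.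
have hkf : D (n`!%:R * f ^+ n) = 0.
  by apply: Dker_mul; [apply: D_nat | apply: D_kX].
have hb'0 : iter n D b' = 0.
  rewrite /b' (iterD_B HD) (iterD_kM HD) // (iterD_pow HD _ _ hR) // subnn ffactnn.
  by rewrite -/a expr0 mulr1 -mulr_natr; ring.
have hBb' : Bi (δ + n%:Z * e1) b'.
  apply: BiB => //.
    apply: (BiM' HG (BiM' HG (Bi_nat HG n`!) (BiX HG n hBf) (erefl _)) hb).
    ring.
  apply: (BiM' HG) hBa (BiX HG n hBR) _; rewrite he; ring.
have [N' [c' [q' [c'0 Eq hq']]]] := IH b' _ hBb' hb'0.
exists (N' + n)%N, (c' * n`!)%N, (q' + (c'%:R * f ^+ N' * a) *: 'X^n); split.
- by rewrite muln_gt0 c'0 fact_gt0.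
- rewrite hornerD hornerZ hornerXn -Eq /b' natrM exprD; ring.
- move=> j; rewrite coefD coefZ coefXn; have [Dq Bq] := hq' j; split.
    rewrite (D_add HD) Dq add0r; apply: Dker_mul; last by apply: D_nat.
    by apply: Dker_mul => //; apply: Dker_mul; [apply: D_nat | apply: D_kX].
  apply: BiD => //.
    by apply: Bi_eq Bq; rewrite PoszD; ring.
  have [->|jn] := eqVneq j n; last by rewrite mulr0; apply: Bi0.
  rewrite mulr1; apply: (BiM' HG) hBa _.
    by apply: (BiM' HG) (Bi_nat HG c') (BiX HG N' hBf) _.
  rewrite PoszD he; ring.
Qed.

End Slice.

Section TI.
Variables (B : idomainType) (D : B -> B).
Hypothesis HQ : contains_Q B.
Hypothesis HD : is_derivation D.
Variables (R0 f0 : B) (m : nat).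
Hypotheses (hR0 : D R0 = f0) (hf0 : D f0 = 0) (f0nz : f0 != 0) (m0 : (0 < m)%N).

Lemma TI n (c : nat -> B) : (forall l, D (c l) = 0) ->
  \sum_(l < n) c l * R0 ^+ (m * l) = 0 -> forall l, (l < n)%N -> c l = 0.
Proof.
elim: n => [|n IH] hc hs l hl //.
have hn : c n = 0.
  have := congr1 (iter (m * n) D) hs.
  rewrite (iterD0 HD) (iterD_sum HD) big_ord_recr /=.
  rewrite big1; last first.
    move=> i _; rewrite (iterD_pow HD _ _ hR0) // ffact_small ?mulr0n //.
    by rewrite ltn_pmul2l.
  rewrite add0r (iterD_pow HD _ _ hR0) // subnn expr0 mulr1 ffactnn => /eqP.
  rewrite -mulr_natr !mulf_eq0 expf_eq0 (negbTE f0nz) andbF orbF.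
  rewrite (negbTE (natr_neq0 HQ (fact_gt0 _))) orbF => /eqP //.
have [->|ln] := eqVneq l n; first by [].
apply: IH => //; last by rewrite ltn_neqAle ln -ltnS.
by move: hs; rewrite big_ord_recr /= hn mul0r addr0.
Qed.

End TI.

Lemma min_nat (P : nat -> Prop) n : P n -> exists m, P m /\ forall k, (k < m)%N -> ~ P k.
Proof.
elim: n {-2}n (leqnn n) => [|N IH] n hn Pn.
  by exists n => //; split => // k; rewrite leqn0 in hn; rewrite (eqP hn).
have [[k [kn Pk]]|H] := classic (exists k, (k < n)%N /\ P k).
  by apply: (IH k) => //; rewrite -ltnS (leq_trans kn hn).
by exists n; split => // k kn Pk; apply: H; exists k.
Qed.

Section Jp.
Variables (B : idomainType) (Bi : int -> B -> Prop) (D : B -> B).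
Hypothesis HG : Zgrading Bi.
Hypothesis HD : is_derivation D.
Variables (e r : int).
Hypothesis e0 : e != 0.

Definition Jp (j : int) := exists k : int, exists α : B,
  [/\ α != 0, D α = 0 & Bi (k * e - j * r) α].

Lemma Jp0 : Jp 0.
Proof. exists 0, 1; split; rewrite ?oner_eq0 ?(D1 HD) //; apply: Bi_eq (Bi1 HG); ring. Qed.

Lemma Jp_add i j : Jp i -> Jp j -> Jp (i + j).
Proof.
move=> [k1 [a1 [a1nz Da1 Ba1]]] [k2 [a2 [a2nz Da2 Ba2]]].
exists (k1 + k2), (a1 * a2); split.
- by rewrite mulf_neq0.
- by apply: (Dker_mul HD).
- by apply: (BiM' HG Ba1 Ba2); ring.
Qed.

Lemma Jp_neg j : Jp j -> Jp (- j).
Proof.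
move=> [k [a [anz Da Ba]]].
have hE : (0 < `|e|)%N by rewrite absz_gt0.
pose E := `|e|.-1.
have hE' : E%:Z = sgz e * e - 1.
  by rewrite -abszEsg -(prednK hE) intS addrC addKr.
exists (sgz e * k * e - sgz e * j * r - k), (a ^+ E); split.
- by rewrite expf_neq0.
- by apply: (D_kX HD).
- apply: Bi_eq (BiX HG E Ba); rewrite hE'; ring.
Qed.

Lemma Jp_nat_mul j n : Jp j -> Jp (n%:Z * j).
Proof.
move=> hj; elim: n => [|n IH]; first by rewrite mul0r; apply: Jp0.
by rewrite intS mulrDl mul1r; apply: Jp_add.
Qed.

Lemma Jp_mul j z : Jp j -> Jp (z * j).
Proof.
move=> hj; case: z => n; first by apply: Jp_nat_mul.
by rewrite NegzE mulNr; apply: Jp_neg; apply: Jp_nat_mul.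
Qed.

Lemma Jp_pos : exists m, (0 < m)%N /\ Jp m%:Z.
Proof.
exists `|e|%N; split; first by rewrite absz_gt0.
exists (sgz e * r), 1; split; rewrite ?oner_eq0 ?(D1 HD) //.
by apply: Bi_eq (Bi1 HG); rewrite abszEsg; ring.
Qed.

Lemma Jp_min : exists m, [/\ (0 < m)%N, Jp m%:Z &
   forall j : nat, Jp j%:Z -> (m %| j)%N].
Proof.
have [m0 [m0p Jm0]] := Jp_pos.
have [m [[mp Jm] mmin]] := @min_nat (fun m => (0 < m)%N /\ Jp m%:Z) m0 (conj m0p Jm0).
exists m; split => // j Jj.
have Ejm := divn_eq j m.
have Jr : Jp (j %% m)%N%:Z.
  have -> : (j %% m)%N%:Z = j%:Z + (- (j %/ m)%N%:Z) * m%:Z.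
    have h := congr1 Posz Ejm; rewrite PoszD PoszM in h.
    move: h; set q := (j %/ m)%N; set rr := (j %% m)%N => ->; ring.
  by apply: Jp_add => //; apply: Jp_mul.
apply/dvdnP; exists (j %/ m)%N.
have [r0|rp] := posnP (j %% m)%N; first by rewrite {1}Ejm r0 addn0.
by exfalso; apply: (mmin (j %% m)%N); [rewrite ltn_pmod | split].
Qed.

End Jp.

Lemma sum_widen (V : zmodType) (g : nat -> V) n N : (n <= N)%N ->
  (forall j, (n <= j)%N -> g j = 0) ->
  \sum_(j < N) g j = \sum_(j < n) g j.
Proof.
move=> nN hg; rewrite -!(big_mkord xpredT) (big_cat_nat (leq0n n) nN) /=.
rewrite [X in _ + X]big1_seq ?addr0 // => j /andP [_].
by rewrite mem_index_iota => /andP [hj _]; apply: hg.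
Qed.

Lemma sum_mult (V : zmodType) (g : nat -> V) m n : (0 < m)%N ->
  (forall j, ~~ (m %| j)%N -> g j = 0) ->
  \sum_(j < m * n) g j = \sum_(l < n) g (m * l)%N.
Proof.
move=> m0 hg; elim: n => [|n IH]; first by rewrite muln0 !big_ord0.
rewrite big_ord_recr /= -IH -!(big_mkord xpredT).
rewrite (big_cat_nat (leq0n (m * n)) (_ : m * n <= m * n.+1)%N) /=; last first.
  by rewrite leq_pmul2l.
congr (_ + _); rewrite big_ltn; last by rewrite ltn_pmul2l.
rewrite [X in _ + X]big1_seq ?addr0 // => j /andP [_].
rewrite mem_index_iota => /andP [h1 h2].
apply: hg; apply/negP => /dvdnP [q Eq].
rewrite Eq in h1 h2.
have a : (n < q)%N by rewrite -(ltn_pmul2l m0) [X in (_ < X)%N]mulnC.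
have b : (q < n.+1)%N by rewrite -(ltn_pmul2l m0) [X in (X < _)%N]mulnC.
by rewrite ltnS leqNgt a in b.
Qed.

Section Core.
Variables (B : idomainType) (Bi : int -> B -> Prop) (D : B -> B).
Hypothesis HG : Zgrading Bi.
Hypothesis HQ : contains_Q B.
Hypothesis HD : is_derivation D.
Variable d : int.
Hypothesis hDd : forall i b, Bi i b -> Bi (i + d) (D b).
Hypothesis HL : locally_nilpotent D.
Variables (R0 f0 : B) (rho : int).
Hypotheses (hBR0 : Bi rho R0) (hR0 : D R0 = f0) (hf0 : D f0 = 0) (f0nz : f0 != 0)
  (he0 : rho + d != 0).

Let e := rho + d.
Let hBf0 : Bi e f0.
Proof. by rewrite -hR0; apply: hDd. Qed.

Let Jm := Jp_min HG HD rho he0.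

Lemma core_data : exists (m K : nat) (beta : B),
  [/\ (0 < m)%N, (forall j : nat, Jp Bi D e rho j%:Z -> (m %| j)%N),
      [/\ beta != 0, D beta = 0 & Bi (K%:Z * e - m%:Z * rho) beta]
    & (K.+1%:Z * e - m%:Z * rho != 0)].
Proof.
have [m [mp Jpm mdiv]] := Jm.
have [km [am [amnz Dam Bam]]] := Jpm.
pose K0 := `|km|%N.
have hK : exists K : nat, km <= K%:Z /\ (K.+1%:Z * e - m%:Z * rho != 0).
  have [h|h] := eqVneq (K0.+1%:Z * e - m%:Z * rho) 0.
    exists K0.+1; split; first by apply: (le_trans (lez_abs km)); rewrite lez_nat.
    move: h; rewrite (intS K0.+1) mulrDl mul1r -addrA => ->; rewrite addr0 /e //.
  by exists K0; split => //; apply: lez_abs.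
have [K [kK hKe]] := hK.
exists m, K, (am * f0 ^+ `|K%:Z - km|%N); split => //.
split; first by rewrite mulf_neq0 // expf_neq0.
  by apply: (Dker_mul HD) => //; apply: (D_kX HD).
apply: (BiM' HG Bam (BiX HG _ hBf0)).
rewrite gez0_abs ?subr_ge0 //; rewrite /e; ring.
Qed.

End Core.

Lemma fs (K : fieldType) (a F : K) p k : F != 0 -> a / F ^+ p = a * F ^+ k / F ^+ (p + k).
Proof. move=> h; rewrite exprD; field; by rewrite !expf_neq0. Qed.
Lemma fm (K : fieldType) (a b F : K) p q : F != 0 ->
  a / F ^+ p * (b / F ^+ q) = a * b / F ^+ (p + q).
Proof. move=> h; rewrite exprD; field; by rewrite !expf_neq0. Qed.

Lemma term_id (K' : fieldType) (Q T Fv : K') P Kk i n : (i <= n)%N -> Fv != 0 ->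
  Q / Fv ^+ P * (T / Fv ^+ Kk) ^+ i * Fv ^+ (P + Kk * n) = Q * T ^+ i * Fv ^+ (Kk * (n - i)).
Proof.
move=> hi h.
have -> : (Kk * n = Kk * i + Kk * (n - i))%N by rewrite -mulnDr subnKC.
rewrite exprMn exprVn -exprM !exprD mulnC; field.
by rewrite !expf_neq0.
Qed.

Lemma term_id2 (K' : fieldType) (Q Cc r b g : K') (m K L l : nat) :
  Cc != 0 -> b != 0 -> g != 0 ->
  Q * (r * b) ^+ (m * l) / (Cc * (g * b) ^+ L) =
  Cc^-1 * Q * b ^+ (m * l) * g ^+ (K.+1 * l) / (g * b) ^+ (L + l) *
  ((r ^+ m * b ^+ K.+1) / (g * b) ^+ K) ^+ l.
Proof.
move=> hC hb hg.
rewrite expr_div_n !exprMn -!exprM !mulSn !exprD.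
field.
by rewrite !expf_neq0.
Qed.
Lemma step1 (K' : fieldType) (C Fv Bb : K') N n : C != 0 -> Fv != 0 ->
  Bb / Fv ^+ n = C * Fv ^+ N * Bb / (C * Fv ^+ (n + N)).
Proof. move=> hC hF; rewrite exprD; field; by rewrite !expf_neq0. Qed.

Section Core2.
Variables (B : idomainType) (Bi : int -> B -> Prop) (D : B -> B).
Hypothesis HG : Zgrading Bi.
Hypothesis HQ : contains_Q B.
Hypothesis HD : is_derivation D.
Variable d : int.
Hypothesis hDd : forall i b, Bi i b -> Bi (i + d) (D b).
Hypothesis HL : locally_nilpotent D.
Variables (R0 f0 : B) (rho e : int).
Hypotheses (hBR0 : Bi rho R0) (hR0 : D R0 = f0) (hf0 : D f0 = 0) (f0nz : f0 != 0)
  (he : e = rho + d) (hBf0 : Bi e f0) (e0 : e != 0).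
Variables (m K : nat) (beta : B).
Hypotheses (mp : (0 < m)%N) (mdiv : forall j : nat, Jp Bi D e rho j%:Z -> (m %| j)%N)
  (bnz : beta != 0) (Db : D beta = 0) (Bb : Bi (K%:Z * e - m%:Z * rho) beta)
  (hKe : K.+1%:Z * e - m%:Z * rho != 0).

Let f := f0 * beta.
Let R := R0 * beta.
Let e1 := K.+1%:Z * e - m%:Z * rho.
Let r1 := rho + (K%:Z * e - m%:Z * rho).

Let hR : D R = f.
Proof. by rewrite /R (D_mul HD) Db mulr0 add0r hR0 mulrC. Qed.
Let hf : D f = 0.
Proof. by apply: (Dker_mul HD). Qed.
Let fnz : f != 0.
Proof. by rewrite mulf_neq0. Qed.
Let hBf : Bi e1 f.
Proof. by apply: (BiM' HG hBf0 Bb); rewrite /e1 intS; ring. Qed.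
Let hBR : Bi r1 R.
Proof. by apply: (BiM' HG hBR0 Bb). Qed.
Let he1 : e1 = r1 + d.
Proof. by rewrite /e1 /r1 he intS; ring. Qed.

Lemma deg_div (L j : nat) q : q != 0 -> D q = 0 ->
  Bi (L%:Z * e1 - j%:Z * r1) q -> (m %| j)%N.
Proof.
move=> qnz Dq Bq; apply: mdiv.
have J1 : Jp Bi D e rho (L%:Z * m%:Z + j%:Z - j%:Z * m%:Z).
  exists (L%:Z * K.+1%:Z - j%:Z * K%:Z), q; split => //.
  by apply: Bi_eq Bq; rewrite /e1 /r1; ring.
have Jm : Jp Bi D e rho m%:Z by exists K%:Z, beta; split.
have := Jp_add HG HD J1 (Jp_mul HG HD e0 (j%:Z - L%:Z) Jm).
by congr Jp; ring.
Qed.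

Local Notation tf := (@FracField.tofrac B).
Let F := tf f.
Let Fnz : F != 0.
Proof. by rewrite tofrac_eq0. Qed.

Let A' (x : {fraction B}) := exists (p : nat) (a : B),
  [/\ D a = 0, Bi (p%:Z * e1) a & x = tf a / F ^+ p].
Let t := tf (R0 ^+ m * beta ^+ K.+1) / F ^+ K.
Let S := loc_deg0 Bi f.

Lemma frac_scale a p k : tf a / F ^+ p = tf (a * f ^+ k) / F ^+ (p + k).
Proof.
by rewrite rmorphM rmorphXn; apply: fs.
Qed.

Lemma A'0 : A' 0.
Proof. by exists 0%N, 0; split; rewrite ?(D0 HD) ?rmorph0 ?mul0r //; apply: Bi0. Qed.
Lemma A'1 : A' 1.
Proof.
exists 0%N, 1; split; rewrite ?(D1 HD) ?rmorph1 ?expr0 ?divr1 //.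
by rewrite mul0r; apply: Bi1.
Qed.
Lemma A'B x y : A' x -> A' y -> A' (x - y).
Proof.
move=> [p [a [Da Ba ->]]] [q [b [Db' Bb' ->]]].
exists (p + q)%N, (a * f ^+ q - b * f ^+ p); split.
- by rewrite (DB HD) !(Dker_mul HD) ?(D_kX HD) ?subrr.
- apply: (BiB HG); first by apply: (BiM' HG Ba (BiX HG q hBf)); rewrite PoszD; ring.
  by apply: (BiM' HG Bb' (BiX HG p hBf)); rewrite PoszD; ring.
- by rewrite rmorphB (frac_scale a p q) (frac_scale b q p) addnC mulrBl.
Qed.
Lemma A'M x y : A' x -> A' y -> A' (x * y).
Proof.
move=> [p [a [Da Ba ->]]] [q [b [Db' Bb' ->]]].
exists (p + q)%N, (a * b); split.
- by apply: (Dker_mul HD).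
- by apply: (BiM' HG Ba Bb'); rewrite PoszD; ring.
- by rewrite rmorphM fm.
Qed.

Lemma S_inv x : S x -> exists (p : nat) (a : B), Bi (p%:Z * e1) a /\ x = tf a / F ^+ p.
Proof.
move=> [d' [Bd' [n [b [Bb' ->]]]]].
have E := deg_uniq HG Bd' hBf fnz; subst d'.
by exists n, b.
Qed.
Lemma S_of (p : nat) a : Bi (p%:Z * e1) a -> S (tf a / F ^+ p).
Proof. by move=> h; exists e1; split => //; exists p, a. Qed.
Lemma S_add x y : S x -> S y -> S (x + y).
Proof.
move=> /S_inv [p [a [Ba ->]]] /S_inv [q [b [Bb' ->]]].
rewrite (frac_scale a p q) (frac_scale b q p) addnC -mulrDl -rmorphD.
apply: S_of; apply: (BiD HG).
  by apply: (BiM' HG Ba (BiX HG q hBf)); rewrite PoszD; ring.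
by apply: (BiM' HG Bb' (BiX HG p hBf)); rewrite PoszD; ring.
Qed.
Lemma S_mul x y : S x -> S y -> S (x * y).
Proof.
move=> /S_inv [p [a [Ba ->]]] /S_inv [q [b [Bb' ->]]].
have -> : tf a / F ^+ p * (tf b / F ^+ q) = tf (a * b) / F ^+ (p + q).
  by rewrite rmorphM fm.
by apply: S_of; apply: (BiM' HG Ba Bb'); rewrite PoszD; ring.
Qed.
Lemma S_A' x : A' x -> S x.
Proof. by move=> [p [a [_ Ba ->]]]; apply: S_of. Qed.
Lemma S_t : S t.
Proof.
apply: S_of; apply: (BiM' HG (BiX HG m hBR0) (BiX HG K.+1 Bb)).
by rewrite /e1 !intS; ring.
Qed.
Lemma S_poly (p : {poly {fraction B}}) : (forall i, A' p`_i) -> S p.[t].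
Proof.
elim/poly_ind: p => [|p c IH] hp.
  by rewrite horner0; have := S_A' A'0.
rewrite hornerMXaddC; apply: S_add; last first.
  by have := hp 0%N; rewrite coefD coefMX coefC /= add0r => /S_A'.
apply: S_mul; last by apply: S_t.
apply: IH => i; have := hp i.+1.
by rewrite coefD coefMX coefC /= addr0.
Qed.

Lemma common_denom n (p : {poly {fraction B}}) : (forall i, A' p`_i) ->
  exists (P : nat) (q : nat -> B), (forall i, D (q i) = 0) /\
    forall i, (i < n)%N -> p`_i = tf (q i) / F ^+ P.
Proof.
move=> hp; elim: n => [|n [P [q [Dq Eq]]]].
  by exists 0%N, (fun _ => 0); split => // i; rewrite (D0 HD).
have [pn [an [Dan _ Ean]]] := hp n.
exists (P + pn)%N, (fun i => if i == n then an * f ^+ P else q i * f ^+ pn); split.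
  move=> i; case: eqP => _; apply: (Dker_mul HD) => //; apply: (D_kX HD) => //.
move=> i; rewrite ltnS leq_eqVlt; case: eqVneq => [->|ni] /= h.
  by rewrite Ean (frac_scale an pn P) addnC.
by rewrite Eq // (frac_scale (q i) P pn).
Qed.

Lemma transc (p : {poly {fraction B}}) : (forall i, A' p`_i) -> p.[t] = 0 -> p = 0.
Proof.
move=> hp ht.
pose n := size p.
have [P [q [Dq Eq]]] := common_denom n hp.
pose tau := R0 ^+ m * beta ^+ K.+1.
pose c := fun l => q l * beta ^+ (K.+1 * l) * f ^+ (K * (n - l)).
have Dc : forall l, D (c l) = 0.
  move=> l; apply: (Dker_mul HD); last by apply: (D_kX HD).
  by apply: (Dker_mul HD) => //; apply: (D_kX HD).
have Hs : \sum_(l < n) c l * R0 ^+ (m * l) = 0.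
  apply/eqP; rewrite -tofrac_eq0; apply/eqP.
  have -> : tf (\sum_(l < n) c l * R0 ^+ (m * l)) = p.[t] * F ^+ (P + K * n).
    rewrite horner_coef mulr_suml rmorph_sum; apply: eq_bigr => [[i hi]] _ /=.
    rewrite Eq // /t term_id ?Fnz //; last by apply: ltnW.
    rewrite -!rmorphXn -!rmorphM; congr tf.
    by rewrite /c [(R0 ^+ m * _) ^+ i]exprMn -!exprM; ring.
  by rewrite ht mul0r.
have Hc := TI HQ HD hR0 hf0 f0nz mp Dc Hs.
apply/polyP => i; rewrite coef0.
case: (ltnP i n) => hi; last by rewrite nth_default.
rewrite Eq //; have := Hc i hi; rewrite /c => /eqP.
rewrite !mulf_eq0 !expf_eq0 (negbTE bnz) (negbTE fnz) !andbF !orbF => /eqP ->.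
by rewrite rmorph0 mul0r.
Qed.

Lemma S_to_poly x : S x -> exists p : {poly {fraction B}}, (forall i, A' p`_i) /\ x = p.[t].
Proof.
move=> /S_inv [n [b [Bb' ->]]].
have [n' [_ hn']] := HL b.
have [N [c [q [c0 Eq hq]]]] := slice HG HD hDd hR hf hBR hBf he1 Bb' hn'.
pose L := (n + N)%N.
have cu := natr_unit HQ c0.
pose cf := fun l => tf (c%:R^-1 * q`_(m * l) * beta ^+ (m * l) * f0 ^+ (K.+1 * l)) / F ^+ (L + l).
exists (\poly_(l < size q) cf l); split.
  move=> i; rewrite coef_poly; case: ifP => _; last exact: A'0.
  exists (L + i)%N, (c%:R^-1 * q`_(m * i) * beta ^+ (m * i) * f0 ^+ (K.+1 * i)); split => //.
  - apply: (Dker_mul HD); last by apply: (D_kX HD).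
    apply: (Dker_mul HD); last by apply: (D_kX HD).
    by apply: (Dker_mul HD); [apply: (Dker_inv HQ HD c0) | apply: (hq _).1].
  - apply: Bi_eq (BiM' HG (BiM' HG (BiM' HG (Bi_inv_nat HG cu) (hq _).2 (erefl _))
        (BiX HG _ Bb) (erefl _)) (BiX HG _ hBf0) (erefl _)).
    rewrite /L /e1 /r1 !PoszD !PoszM !intS; ring.
pose g := fun j => tf (q`_j * R ^+ j) / (tf c%:R * F ^+ L).
have cnz : tf (c%:R : B) != 0 by rewrite tofrac_eq0 natr_neq0.
have E1 : tf b / F ^+ n = \sum_(j < size q) g j.
  rewrite /g -mulr_suml -rmorph_sum.
  have -> : \sum_(i < size q) q`_i * R ^+ i = q.[R] by rewrite horner_coef.
  by rewrite -Eq !rmorphM rmorphXn; apply: step1.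
have gz1 : forall j, (size q <= j)%N -> g j = 0.
  by move=> j hj; rewrite /g nth_default // mul0r rmorph0 mul0r.
have gz2 : forall j, ~~ (m %| j)%N -> g j = 0.
  move=> j hj; rewrite /g; have [->|qnz] := eqVneq q`_j 0; first by rewrite mul0r rmorph0 mul0r.
  exfalso; move/negP: hj; apply.
  apply: (deg_div (L := L) qnz (hq j).1); apply: Bi_eq (hq j).2.
  by rewrite /L PoszD; ring.
rewrite E1 horner_poly -(sum_widen (N := m * size q) _ gz1); last by rewrite leq_pmull.
rewrite (sum_mult _ mp gz2); apply: eq_bigr => l _.
rewrite /g /cf /t /F /f /R !rmorphM !rmorphXn (rmorphV _ cu) !rmorphM.
apply: term_id2; rewrite ?tofrac_eq0 //; first [exact: cnz | exact: (natr_neq0 HQ c0) | move: cnz; rewrite rmorph_nat; exact ].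
Qed.

Lemma core2_result : exists f' : B, (exists b, f' = D b) /\ D f' = 0 /\ cylindrical Bi f'.
Proof.
exists f; split; first by exists R.
split => //; split => //; first by exists e1.
exists A', t; split.
- exact: A'1.
- exact: A'B.
- exact: A'M.
- move=> x; split; first exact: S_to_poly.
  by move=> [p [hp ->]]; apply: S_poly.
- exact: transc.
Qed.

End Core2.

Section Final.
Variables (B : idomainType) (Bi : int -> B -> Prop) (D : B -> B).
Hypothesis HG : Zgrading Bi.
Hypothesis HD : is_derivation D.
Variable d : int.
Hypothesis hDd : forall i b, Bi i b -> Bi (i + d) (D b).
Hypothesis HL : locally_nilpotent D.

Lemma local_slice_aux n : forall y δ, Bi δ y -> D y != 0 -> iter n D y = 0 ->
  exists rho R0, [/\ Bi rho R0, D R0 != 0 & D (D R0) = 0].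
Proof.
elim: n => [|n IH] y δ hy Dy hn.
  by rewrite /= in hn; rewrite hn (D0 HD) eqxx in Dy.
have [DDy|DDy] := eqVneq (D (D y)) 0; first by exists δ, y.
by apply: (IH (D y) (δ + d)) => //; [apply: hDd | rewrite -iterSr].
Qed.

Lemma local_slice : (exists b, D b != 0) ->
  exists rho R0, [/\ Bi rho R0, D R0 != 0 & D (D R0) = 0].
Proof.
move=> [b Db].
case: HG => _ _ _ Hdec _.
have [s [g [hg Eb]]] := Hdec b.
have : has (fun i => D (g i) != 0) s.
  apply/negPn/negP => /hasPn h; move: Db; rewrite Eb (D_sum HD) big1_seq ?eqxx //.
  by move=> i /andP [_ /h /negPn /eqP].
move=> /hasP [i _ Dgi].
have [n [_ hn]] := HL (g i).
by apply: (local_slice_aux (hg i) Dgi hn).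
Qed.

Lemma ker_deg : (exists b, D b = 0 /\ ~ Bi 0 b) ->
  exists eta h, [/\ eta != 0, Bi eta h, h != 0 & D h = 0].
Proof.
move=> [b [Db nb]].
have [s [g [us hg Eb]]] := decomp_uniq HG b.
have Dg : forall i, i \in s -> D (g i) = 0.
  move=> i iin.
  pose g' := fun j => D (g (j - d)).
  have hg' : forall j, Bi j (g' j).
    by move=> j; rewrite /g'; have := hDd (hg (j - d)); rewrite subrK.
  have us' : uniq (map (fun j => j + d) s) by rewrite map_inj_uniq // => x y /addIr.
  have hsum : Bi (i + d + 1) (\sum_(j <- map (fun j => j + d) s) g' j).
    rewrite big_map /g' (eq_bigr (fun j => D (g j))); last by move=> j _; rewrite addrK.
    by rewrite -(D_sum HD) -Eb Db; apply: Bi0.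
  have := dir_comp HG us' hg' hsum (i := i + d).
  rewrite /g' addrK; apply; first by apply: (map_f (fun j => j + d)).
  by rewrite -subr_eq0 opprD addrA subrr sub0r oppr_eq0 oner_eq0.
have : has (fun i => (i != 0) && (g i != 0)) s.
  apply/negPn/negP => /hasPn h; apply: nb; rewrite Eb big_seq; apply: Bi_sum => // i iin.
  have := h i iin; rewrite negb_and !negbK; case/orP => [/eqP ->|/eqP ->]; first exact: hg.
  exact: Bi0.
move=> /hasP [i iin /andP [i0 gi0]].
by exists i, (g i); split => //; apply: Dg.
Qed.

End Final.

Unset Implicit Arguments.

Theorem proposition4p3 (B : idomainType) (Bi : int -> B -> Prop) (D : B -> B) :
  Zgrading Bi -> contains_Q B ->
  is_derivation D -> homogeneous_map Bi D -> locally_nilpotent D ->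
  (exists b, D b != 0) ->
  (exists b, D b = 0 /\ ~ Bi 0 b) ->
  exists f : B, (exists b, f = D b) /\ D f = 0 /\ cylindrical Bi f.
Proof.
move=> HG HQ HD [d hDd] HL hb hk.
have [rho [R0 [BR0 DR0 DDR0]]] := local_slice HG HD hDd HL hb.
have [eta [h [eta0 Bh hnz Dh]]] := ker_deg HG HD hDd hk.
have [rho' [R0' [BR0' DR0' DDR0' he0]]] : exists rho' R0',
    [/\ Bi rho' R0', D R0' != 0, D (D R0') = 0 & rho' + d != 0].
  have [E|E] := eqVneq (rho + d) 0; last by exists rho, R0.
  exists (rho + eta), (R0 * h).
  have DR : D (R0 * h) = h * D R0 by rewrite (D_mul HD) Dh mulr0 add0r.
  split.
  - by apply: (BiM HG).
  - by rewrite DR mulf_neq0.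
  - by rewrite DR (Dker_mul HD).
  - by rewrite addrAC E add0r.
have [m [K [beta [mp mdiv [bnz Db Bb] hKe]]]] :=
  core_data HG HD hDd BR0' (erefl _) DDR0' DR0' he0.
have H1 := core2_result HG HQ HD hDd HL BR0' (erefl _) DDR0' DR0' (erefl _).
have H2 := H1 (hDd _ _ BR0') he0.
have H3 := H2 m K beta mp mdiv.
have H4 := H3 bnz Db Bb hKe.
exact: H4.
Qed.
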